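(* Let $\mathcal{Z}=\mathbb{Z}^d$, $p\ge1$, $q\ge0$, and let $(a_{\ell;\mathbf{j}})_{\ell\in\mathcal{Z},\mathbf{j}\in\mathcal{Z}^p}$ be coefficients such that $a_{\ell;\mathbf{j}}=0$ whenever $\max_{1\le n\le d}|\mathcal{M}(\ell,\mathbf{j})^n|>q$, where $\mathcal{M}(\ell,\mathbf{j})=\ell-j_1-\cdots-j_p\in\mathbb{Z}^d$. There is a constant $C$ depending only on $d,q,p$ such that for all $M\in\mathbb{N}\cup\{+\infty\}$ and all integers $N\ge2$: (i) $\#\{(\ell,j_1,\dots,j_p)\in\mathcal{K}_M^{p+1}: \|j_1\|\cdots\|j_p\|\le N,\ a_{\ell;\mathbf{j}}\ne0\}\le C N^d(\log N)^{p-1}$; (ii) $\#\{(\ell,j_1,\dots,j_p)\in(\mathcal{K}^*_M)^{p+1}: |j_1|\cdots|j_p|\le N,\ a_{\ell;\mathbf{j}}\ne0\}\le C N(\log N)^{dp-1}$.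
   Context: For $j=(j^1,\dots,j^d)\in\mathbb{Z}^d$: $\|j\|=\max(1,|j^1|,\dots,|j^d|)$ and the sparse size $|j|=\prod_{n=1}^d(1+|j^n|)$. For $M\in\mathbb{N}\cup\{+\infty\}$, $\mathcal{K}_M=\{j:\|j\|\le M\}$ and $\mathcal{K}^*_M=\{j:|j|\le M\}$. $\#F$ is the cardinality of $F$. *)

(* Defs.v *)
(* points of Z^d are lists of integers of length d. *)
From Stdlib Require Import Reals ZArith List.
Import ListNotations.
Open Scope Z_scope.

Definition normInf (j : list Z) : Z :=
  fold_right (fun x m => Z.max (Z.abs x) m) 1 j.

Definition maxAbs (v : list Z) : Z :=
  fold_right (fun x m => Z.max (Z.abs x) m) 0 v.

Definition sparseSize (j : list Z) : Z :=
  fold_right (fun x m => (1 + Z.abs x) * m) 1 j.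

(* M = None stands for M = +infinity *)
Definition inK (M : option nat) (j : list Z) : Prop :=
  match M with None => True | Some m => normInf j <= Z.of_nat m end.

Definition inKstar (M : option nat) (j : list Z) : Prop :=
  match M with None => True | Some m => sparseSize j <= Z.of_nat m end.

Fixpoint vsub (u v : list Z) : list Z :=
  match u, v with
  | x :: u', y :: v' => (x - y) :: vsub u' v'
  | _, _ => u
  end.

Definition Mvec (l : list Z) (js : list (list Z)) : list Z :=
  fold_left vsub js l.

Definition wf (d p : nat) (l : list Z) (js : list (list Z)) : Prop :=
  length l = d /\ length js = p /\ Forall (fun j => length j = d) js.

Definition prodZ (f : list Z -> Z) (js : list (list Z)) : Z :=
  fold_right (fun j m => f j * m) 1 js.

(* Main.v *)
Require Import Defs.
From Stdlib Require Import Reals ZArith List Lia Lra.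
Import ListNotations.
Open Scope Z_scope.

Definition prodG {X} (w : X -> Z) (xs : list X) : Z := fold_right (fun x m => w x * m) 1 xs.

Definition erange (L : Z) : list Z := map Z.of_nat (seq 0 (S (Z.to_nat L))).

Fixpoint cov {X} (ball : Z -> list X) (n : nat) (N : Z) : list (list X) :=
 match n with
 | O => map (fun x => [x]) (ball N)
 | S n' => flat_map (fun e => flat_map (fun x => map (cons x) (cov ball n' (N / 2^e))) (ball (2^(e+1)))) (erange (Z.log2 N))
 end.

Lemma prodG_ge1 {X} (w : X -> Z) (wpos : forall x, 1 <= w x) xs : 1 <= prodG w xs.
Proof. induction xs; simpl; [lia|]. fold (prodG w xs). specialize (wpos a). nia. Qed.

Lemma flat_map_len {A B} (f : A -> list B) l (Bd : Z) :
  (forall y, In y l -> Z.of_nat (length (f y)) <= Bd) ->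
  Z.of_nat (length (flat_map f l)) <= Z.of_nat (length l) * Bd.
Proof.
  induction l; intros H; [simpl; lia|]. cbn [flat_map length].
  rewrite length_app. assert (H1 := H a (or_introl eq_refl)).
  assert (H2 : Z.of_nat (length (flat_map f l)) <= Z.of_nat (length l) * Bd) by (apply IHl; intros; apply H; now right).
  rewrite Nat2Z.inj_succ. nia.
Qed.

Lemma cov_in {X} (P : X -> Prop) w ball (wpos: forall x, 1 <= w x)
  (bc: forall m x, P x -> w x <= m -> In x (ball m)) :
  forall n xs N, length xs = S n -> Forall P xs -> prodG w xs <= N -> In xs (cov ball n N).
Proof.
  induction n; intros xs N Hl HP Hp.
  - destruct xs as [|x [|]]; simpl in Hl; try discriminate.
    simpl. apply (in_map (fun y => [y])). inversion HP; subst. apply bc; auto. simpl in Hp. lia.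
  - destruct xs as [|x xs]; simpl in Hl; try discriminate.
    inversion HP; subst. simpl in Hp. fold (prodG w xs) in Hp.
    assert (G1 := prodG_ge1 w wpos xs). assert (W := wpos x).
    set (e := Z.log2 (w x)).
    assert (S1 := Z.log2_spec (w x) ltac:(lia)). fold e in S1.
    rewrite <- Z.add_1_r in S1.
    assert (E0 : 0 <= e) by apply Z.log2_nonneg.
    assert (E1 : e <= Z.log2 N) by (apply Z.log2_le_mono; nia).
    cbn [cov]. apply in_flat_map. exists e. split.
    + unfold erange. apply in_map_iff. exists (Z.to_nat e). split; [lia|].
      apply in_seq. lia.
    + apply in_flat_map. exists x. split; [apply bc; auto; lia|].
      apply in_map. apply IHn; auto.
      apply Z.div_le_lower_bound; [lia|]. nia.
Qed.

Lemma cov_len {X} (ball : Z -> list X) c D (c0 : 0 <= c) (D0 : 0 <= D)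
  (bl : forall m, 1 <= m -> Z.of_nat (length (ball m)) <= c * m^D) :
  forall n N, 1 <= N -> Z.of_nat (length (cov ball n N)) <=
     c * (c*2^D)^(Z.of_nat n) * N^D * (Z.log2 N + 1)^(Z.of_nat n).
Proof.
  induction n; intros N HN.
  - simpl. rewrite length_map. specialize (bl N HN). lia.
  - cbn [cov].
    set (K := c * 2^D). set (L := Z.log2 N).
    assert (L0 : 0 <= L) by apply Z.log2_nonneg.
    assert (K0 : 0 <= K) by (unfold K; apply Z.mul_nonneg_nonneg; [lia| apply Z.pow_nonneg; lia]).
    eapply Z.le_trans.
    + apply flat_map_len with (Bd := c * K^(Z.of_nat n) * K * N^D * (L+1)^(Z.of_nat n)).
      intros e He. unfold erange in He. apply in_map_iff in He. destruct He as [k [Hk Hk2]].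
      apply in_seq in Hk2. subst e.
      set (e := Z.of_nat k).
      assert (e0 : 0 <= e) by lia.
      assert (eL : e <= L) by lia.
      assert (P0 : 0 < 2^e) by (apply Z.pow_pos_nonneg; lia).
      assert (PL : 2^e <= N).
      { eapply Z.le_trans. apply Z.pow_le_mono_r; [lia|exact eL]. apply Z.log2_spec. lia. }
      set (N' := N / 2^e).
      assert (N1 : 1 <= N') by (apply Z.div_le_lower_bound; lia).
      assert (N2 : 2^e * N' <= N) by (apply Z.mul_div_le; lia).
      assert (N3 : N' <= N) by nia.
      assert (L2 : Z.log2 N' <= L) by (apply Z.log2_le_mono; lia).
      assert (IH := IHn N' N1).
      eapply Z.le_trans.
      * apply flat_map_len with (Bd := c * K ^ Z.of_nat n * N' ^ D * (Z.log2 N' + 1) ^ Z.of_nat n).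
        intros x _. rewrite length_map. exact IH.
      * rewrite Z.pow_add_r, Z.pow_1_r by lia. assert (B1 := bl (2^e*2) ltac:(lia)).
        idtac.
        rewrite Z.pow_mul_l in B1.
        assert (A1 : (2^e)^D * N'^D <= N^D).
        { rewrite <- Z.pow_mul_l. apply Z.pow_le_mono_l. nia. }
        assert (A2 : (Z.log2 N' + 1) ^ Z.of_nat n <= (L+1)^Z.of_nat n).
        { apply Z.pow_le_mono_l. assert (0 <= Z.log2 N') by apply Z.log2_nonneg. lia. }
        assert (A3 : 0 <= (2^e)^D) by (apply Z.pow_nonneg; lia).
        assert (A4 : 0 <= N'^D) by (apply Z.pow_nonneg; lia).
        assert (A5 : 0 <= K^Z.of_nat n) by (apply Z.pow_nonneg; lia).
        assert (A6 : 0 <= (Z.log2 N' + 1) ^ Z.of_nat n) by (apply Z.pow_nonneg; assert (0 <= Z.log2 N') by apply Z.log2_nonneg; lia).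
        assert (A7 : 0 <= 2^D) by (apply Z.pow_nonneg; lia).
        set (a := (2^e)^D) in *. set (b := N'^D) in *. set (u := K^Z.of_nat n) in *.
        set (v := (Z.log2 N' + 1) ^ Z.of_nat n) in *. set (v' := (L+1)^Z.of_nat n) in *.
        set (Z0 := Z.of_nat (length (ball (2 ^ e * 2)))) in *.
        assert (Z0 * (c * u * b * v) <= (c * 2^D * a) * (c * u * b * v)).
        { apply Z.mul_le_mono_nonneg_r; [|lia]. apply Z.mul_nonneg_nonneg; [|lia]. apply Z.mul_nonneg_nonneg; [|lia]. apply Z.mul_nonneg_nonneg; lia. }
        assert ((c * 2^D * a) * (c * u * b * v) = (c * u * K) * (a * b) * v) by (unfold K; ring).
        assert ((c * u * K) * (a * b) * v <= (c*u*K) * N^D * v').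
        { assert (0 <= c*u*K) by (apply Z.mul_nonneg_nonneg; [apply Z.mul_nonneg_nonneg|]; lia).
          apply Z.le_trans with ((c*u*K) * N^D * v); [apply Z.mul_le_mono_nonneg_r; [lia|]; apply Z.mul_le_mono_nonneg_l; lia|].
          apply Z.mul_le_mono_nonneg_l; [|lia]. apply Z.mul_nonneg_nonneg; [lia|]. apply Z.pow_nonneg; lia. }
        lia.
    + unfold erange. rewrite length_map, length_seq.
      rewrite Nat2Z.inj_succ, Z2Nat.id by lia.
      rewrite Nat2Z.inj_succ. rewrite !Z.pow_succ_r by lia.
      apply Z.eq_le_incl. ring.
Qed.
Close Scope Z_scope.
Open Scope Z_scope.

Definition rng (m : Z) : list Z := map (fun k => Z.of_nat k - m) (seq 0 (S (Z.to_nat (2*m)))).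

Lemma rng_in m x : Z.abs x <= m -> In x (rng m).
Proof.
  intros H. unfold rng. apply in_map_iff. exists (Z.to_nat (x + m)). split; [lia|].
  apply in_seq. lia.
Qed.

Lemma rng_len m : 0 <= m -> Z.of_nat (length (rng m)) = 2*m+1.
Proof. intros. unfold rng. rewrite length_map, length_seq. lia. Qed.

Fixpoint boxd (d : nat) (m : Z) : list (list Z) :=
  match d with
  | O => [[]]
  | S d' => flat_map (fun x => map (cons x) (boxd d' m)) (rng m)
  end.

Lemma boxd_in d m v : length v = d -> Forall (fun x => Z.abs x <= m) v -> In v (boxd d m).
Proof.
  revert v; induction d; intros v Hl HF.
  - destruct v; simpl in *; [auto|discriminate].
  - destruct v as [|x v]; simpl in Hl; [discriminate|]. inversion HF; subst.
    cbn [boxd]. apply in_flat_map. exists x. split; [apply rng_in; auto|].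
    apply in_map. apply IHd; auto.
Qed.

Lemma boxd_len d m : 0 <= m -> Z.of_nat (length (boxd d m)) <= (2*m+1)^(Z.of_nat d).
Proof.
  intros Hm. induction d.
  - simpl. lia.
  - cbn [boxd]. eapply Z.le_trans.
    + apply flat_map_len with (Bd := (2*m+1)^(Z.of_nat d)). intros. rewrite length_map. auto.
    + rewrite rng_len by lia. rewrite Nat2Z.inj_succ, Z.pow_succ_r by lia. lia.
Qed.

Lemma normInf_ge1 j : 1 <= normInf j.
Proof. induction j; simpl; lia. Qed.

Lemma normInf_forall j m : normInf j <= m -> Forall (fun x => Z.abs x <= m) j.
Proof. induction j; simpl; intros H; constructor; lia || (apply IHj; lia). Qed.

Lemma maxAbs_forall j m : maxAbs j <= m -> Forall (fun x => Z.abs x <= m) j.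
Proof. induction j; simpl; intros H; constructor; lia || (apply IHj; lia). Qed.

Fixpoint vadd (u v : list Z) : list Z :=
  match u, v with
  | x :: u', y :: v' => (x + y) :: vadd u' v'
  | _, _ => u
  end.

Lemma vadd_vsub u v : vadd (vsub u v) v = u.
Proof.
  revert v; induction u; intros v; destruct v; simpl; auto. rewrite IHu. f_equal. lia.
Qed.

Lemma length_vsub u v : length (vsub u v) = length u.
Proof. revert v; induction u; intros v; destruct v; simpl; auto. Qed.

Definition addback (m : list Z) (js : list (list Z)) := fold_right (fun j acc => vadd acc j) m js.

Lemma addback_Mvec js l : addback (Mvec l js) js = l.
Proof.
  revert l; induction js; intros l; [reflexivity|].
  change (vadd (addback (Mvec (vsub l a) js) js) a = l). rewrite IHjs. apply vadd_vsub.
Qed.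

Lemma length_Mvec js l : length (Mvec l js) = length l.
Proof.
  revert l; induction js; intros l; [reflexivity|].
  change (length (Mvec (vsub l a) js) = length l). rewrite IHjs. apply length_vsub.
Qed.

Fixpoint chunk (d n : nat) (xs : list Z) : list (list Z) :=
  match n with O => [] | S n' => firstn d xs :: chunk d n' (skipn d xs) end.

Lemma chunk_concat d js : Forall (fun j : list Z => length j = d) js -> chunk d (length js) (concat js) = js.
Proof.
  induction js; intros H; [reflexivity|]. inversion H; subst.
  simpl. rewrite firstn_app, skipn_app, Nat.sub_diag, firstn_all, skipn_all. simpl.
  rewrite app_nil_r. f_equal. auto.
Qed.

Lemma length_concat_d d js : Forall (fun j : list Z => length j = d) js -> length (concat js) = (d * length js)%nat.
Proof.
  induction js; intros H; simpl; [lia|]. inversion H; subst. rewrite length_app, IHjs by auto. lia.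
Qed.

Lemma prodG_app {X} (w : X -> Z) l1 l2 : prodG w (l1 ++ l2) = prodG w l1 * prodG w l2.
Proof. unfold prodG. induction l1; simpl. { destruct (fold_right _ 1 l2); reflexivity. } rewrite IHl1. ring. Qed.

Lemma prodZ_sparse js : prodZ sparseSize js = prodG (fun x => 1 + Z.abs x) (concat js).
Proof.
  induction js; [reflexivity|]. change (sparseSize a * prodZ sparseSize js = prodG (fun x => 1 + Z.abs x) (a ++ concat js)). rewrite prodG_app, <- IHjs. reflexivity.
Qed.
Open Scope R_scope.

Lemma ln_le' x y : 0 < x -> x <= y -> ln x <= ln y.
Proof.
  intros Hx Hxy. destruct (Rle_lt_or_eq_dec _ _ Hxy) as [H|H].
  - left. apply ln_increasing; auto.
  - subst. right. reflexivity.
Qed.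

Lemma log_bound (N : nat) : (2 <= N)%nat -> IZR (Z.log2 (Z.of_nat N) + 1) <= 4 * ln (INR N).
Proof.
  intros HN. set (k := Z.log2 (Z.of_nat N)).
  assert (k1 : (1 <= k)%Z).
  { change 1%Z with (Z.log2 2). apply Z.log2_le_mono. lia. }
  assert (kp : (2 ^ k <= Z.of_nat N)%Z) by (apply Z.log2_spec; lia).
  assert (R1 : 2 ^ (Z.to_nat k) <= INR N).
  { rewrite INR_IZR_INZ, pow_IZR, Z2Nat.id by lia. apply IZR_le. exact kp. }
  assert (R2 : ln (2 ^ (Z.to_nat k)) <= ln (INR N)).
  { apply ln_le'; auto. apply pow_lt. lra. }
  rewrite ln_pow in R2 by lra. rewrite INR_IZR_INZ, Z2Nat.id in R2 by lia.
  assert (L2 := ln_lt_2).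
  apply IZR_le in k1.
  rewrite plus_IZR. nra.
Qed.

Lemma final_real (len N D e : nat) (A : Z) : (2 <= N)%nat -> (0 <= A)%Z ->
  (Z.of_nat len <= A * Z.of_nat N ^ Z.of_nat D * (Z.log2 (Z.of_nat N) + 1) ^ Z.of_nat e)%Z ->
  INR len <= IZR (A * 4 ^ Z.of_nat e) * INR N ^ D * ln (INR N) ^ e.
Proof.
  intros HN HA H. rewrite INR_IZR_INZ. apply IZR_le in H.
  rewrite !mult_IZR, <- !pow_IZR in H.
  rewrite mult_IZR, <- pow_IZR.
  assert (LB := log_bound N HN).
  set (L := IZR (Z.log2 (Z.of_nat N) + 1)) in *.
  assert (L0 : 0 <= L) by (unfold L; apply IZR_le; assert (0 <= Z.log2 (Z.of_nat N))%Z by apply Z.log2_nonneg; lia).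
  assert (P1 : L ^ e <= (4 * ln (INR N)) ^ e) by (apply pow_incr; lra).
  rewrite Rpow_mult_distr in P1.
  assert (A0 : 0 <= IZR A * INR N ^ D).
  { apply Rmult_le_pos; [apply IZR_le; auto|]. apply pow_le. apply pos_INR. }
  rewrite <- !INR_IZR_INZ in H |- *. rewrite <- (INR_IZR_INZ N) in H.
  eapply Rle_trans; [exact H|].
  replace (IZR A * IZR 4 ^ e * INR N ^ D * ln (INR N) ^ e) with ((IZR A * INR N ^ D) * (4 ^ e * ln (INR N) ^ e)) by ring.
  replace (IZR A * INR N ^ D * L ^ e) with ((IZR A * INR N ^ D) * L ^ e) by ring.
  apply Rmult_le_compat_l; auto.
Qed.
Close Scope R_scope.

Lemma combine_real (x a b B1 B2 : R) : (x <= a * B1 * B2)%R -> (0 <= b)%R -> (0 <= B1)%R -> (0 <= B2)%R ->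
  (x <= (a + b) * B1 * B2)%R.
Proof. intros. assert (0 <= b * B1 * B2)%R by (apply Rmult_le_pos; [apply Rmult_le_pos|]; auto). nra. Qed.

Lemma combine_real2 (x a b B1 B2 : R) : (x <= b * B1 * B2)%R -> (0 <= a)%R -> (0 <= B1)%R -> (0 <= B2)%R ->
  (x <= (a + b) * B1 * B2)%R.
Proof. intros. assert (0 <= a * B1 * B2)%R by (apply Rmult_le_pos; [apply Rmult_le_pos|]; auto). nra. Qed.

Lemma ln_nonneg (N : nat) : (2 <= N)%nat -> (0 <= ln (INR N))%R.
Proof.
  intros. rewrite <- ln_1. apply ln_le'; [lra|]. apply le_INR in H. simpl in H. lra.
Qed.

Theorem lemma4p2 (d p q : nat) (hd : (1 <= d)%nat) (hp : (1 <= p)%nat) :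
  exists C : R,
    forall (A : Type) (zero : A) (a : list Z -> list (list Z) -> A),
      (forall l js, wf d p l js -> (maxAbs (Mvec l js) > Z.of_nat q)%Z -> a l js = zero) ->
      forall (M : option nat) (N : nat), (2 <= N)%nat ->
        (forall s : list (list Z * list (list Z)),
            NoDup s ->
            (forall x, In x s ->
               wf d p (fst x) (snd x) /\ inK M (fst x) /\ Forall (inK M) (snd x) /\
               (prodZ normInf (snd x) <= Z.of_nat N)%Z /\ a (fst x) (snd x) <> zero) ->
            (INR (length s) <= C * INR N ^ d * ln (INR N) ^ (p - 1))%R)
        /\
        (forall s : list (list Z * list (list Z)),
            NoDup s ->
            (forall x, In x s ->
               wf d p (fst x) (snd x) /\ inKstar M (fst x) /\ Forall (inKstar M) (snd x) /\
               (prodZ sparseSize (snd x) <= Z.of_nat N)%Z /\ a (fst x) (snd x) <> zero) ->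
            (INR (length s) <= C * INR N * ln (INR N) ^ (d * p - 1))%R).
Proof.
  destruct p as [|p']; [lia|].
  replace (S p' - 1)%nat with p' by lia.
  set (k := (d * S p' - 1)%nat).
  assert (Hk : (d * S p' = S k)%nat) by (unfold k; nia).
  set (Q := ((2 * Z.of_nat q + 1) ^ Z.of_nat d)%Z).
  assert (Q0 : (0 <= Q)%Z) by (apply Z.pow_nonneg; lia).
  set (A1 := (Q * (3 ^ Z.of_nat d * (3 ^ Z.of_nat d * 2 ^ Z.of_nat d) ^ Z.of_nat p'))%Z).
  set (A2 := (Q * (3 * (3 * 2 ^ 1) ^ Z.of_nat k))%Z).
  assert (A10 : (0 <= A1)%Z).
  { unfold A1. apply Z.mul_nonneg_nonneg; auto. apply Z.mul_nonneg_nonneg; apply Z.pow_nonneg; [lia|].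
    apply Z.mul_nonneg_nonneg; apply Z.pow_nonneg; lia. }
  assert (A20 : (0 <= A2)%Z).
  { unfold A2. apply Z.mul_nonneg_nonneg; auto. apply Z.mul_nonneg_nonneg; [lia|]. apply Z.pow_nonneg; lia. }
  set (C1 := IZR (A1 * 4 ^ Z.of_nat p')). set (C2 := IZR (A2 * 4 ^ Z.of_nat k)).
  assert (C10 : (0 <= C1)%R) by (apply IZR_le; apply Z.mul_nonneg_nonneg; auto; apply Z.pow_nonneg; lia).
  assert (C20 : (0 <= C2)%R) by (apply IZR_le; apply Z.mul_nonneg_nonneg; auto; apply Z.pow_nonneg; lia).
  exists (C1 + C2)%R.
  intros A zero a Ha M N HN.
  assert (LN := ln_nonneg N HN).
  assert (NN : (0 <= INR N)%R) by apply pos_INR.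
  assert (N1 : (1 <= Z.of_nat N)%Z) by lia.
  split.
  - intros s Hnd Hs.
    set (t := flat_map (fun js => map (fun m => (addback m js, js)) (boxd d (Z.of_nat q)))
                (cov (boxd d) p' (Z.of_nat N))).
    assert (Hincl : incl s t).
    { intros [l js] Hx. destruct (Hs _ Hx) as [[Hl [Hp Hf]] [_ [_ [Hprod Ha0]]]]. simpl in *.
      unfold t. apply in_flat_map. exists js. split.
      - apply (cov_in (fun j : list Z => length j = d) normInf).
        + apply normInf_ge1.
        + intros m x Hx1 Hx2; apply boxd_in; auto; apply normInf_forall; auto.
        + exact Hp.
        + exact Hf.
        + exact Hprod.
      - apply in_map_iff. exists (Mvec l js). split.
        + rewrite addback_Mvec; reflexivity.
        + apply boxd_in. rewrite length_Mvec; auto. apply maxAbs_forall.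
          destruct (Z_le_gt_dec (maxAbs (Mvec l js)) (Z.of_nat q)) as [Hle|Hgt]; auto.
          exfalso; apply Ha0; apply Ha; [split; auto|auto]. }
    assert (Hlen := NoDup_incl_length Hnd Hincl).
    assert (Ht : (Z.of_nat (length t) <= Z.of_nat (length (cov (boxd d) p' (Z.of_nat N))) * Q)%Z).
    { apply flat_map_len. intros. rewrite length_map. apply boxd_len. lia. }
    assert (Hc := cov_len (boxd d) (3 ^ Z.of_nat d) (Z.of_nat d) ltac:(apply Z.pow_nonneg; lia) ltac:(lia)
                   ltac:(intros m Hm; eapply Z.le_trans; [apply boxd_len; lia|];
                         rewrite <- Z.pow_mul_l; apply Z.pow_le_mono_l; lia) p' (Z.of_nat N) N1).
    assert (HZ : (Z.of_nat (length s) <= A1 * Z.of_nat N ^ Z.of_nat d * (Z.log2 (Z.of_nat N) + 1) ^ Z.of_nat p')%Z).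
    { eapply Z.le_trans; [|eapply Z.le_trans; [exact Ht|]]; [lia|].
      eapply Z.le_trans; [apply Z.mul_le_mono_nonneg_r; [exact Q0|exact Hc]|].
      apply Z.eq_le_incl. unfold A1. ring. }
    assert (HR := final_real _ _ _ _ _ HN A10 HZ).
    apply combine_real; auto. apply pow_le; auto. apply pow_le; auto.
  - intros s Hnd Hs.
    set (t := flat_map (fun js => map (fun m => (addback m js, js)) (boxd d (Z.of_nat q)))
                (map (chunk d (S p')) (cov rng k (Z.of_nat N)))).
    assert (Hincl : incl s t).
    { intros [l js] Hx. destruct (Hs _ Hx) as [[Hl [Hp Hf]] [_ [_ [Hprod Ha0]]]]. simpl in *.
      unfold t. apply in_flat_map. exists js. split.
      - apply in_map_iff. exists (concat js). split.
        + change (chunk d (S p') (concat js) = js). rewrite <- Hp. apply chunk_concat; auto.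
        + apply (cov_in (fun _ => True) (fun x => 1 + Z.abs x)%Z).
          * intros; lia.
          * intros m x _ Hx2; apply rng_in; lia.
          * rewrite (length_concat_d d) by auto. rewrite Hp. exact Hk.
          * apply Forall_forall; auto.
          * rewrite <- prodZ_sparse. exact Hprod.
      - apply in_map_iff. exists (Mvec l js). split.
        + rewrite addback_Mvec; reflexivity.
        + apply boxd_in. rewrite length_Mvec; auto. apply maxAbs_forall.
          destruct (Z_le_gt_dec (maxAbs (Mvec l js)) (Z.of_nat q)) as [Hle|Hgt]; auto.
          exfalso; apply Ha0; apply Ha; [split; auto|auto]. }
    assert (Hlen := NoDup_incl_length Hnd Hincl).
    assert (Ht : (Z.of_nat (length t) <= Z.of_nat (length (cov rng k (Z.of_nat N))) * Q)%Z).
    { rewrite <- (length_map (chunk d (S p'))). apply flat_map_len. intros. rewrite length_map. apply boxd_len. lia. }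
    assert (Hc := cov_len rng 3 1 ltac:(lia) ltac:(lia)
                   ltac:(intros m Hm; rewrite rng_len by lia; lia) k (Z.of_nat N) N1).
    assert (HZ : (Z.of_nat (length s) <= A2 * Z.of_nat N ^ Z.of_nat 1 * (Z.log2 (Z.of_nat N) + 1) ^ Z.of_nat k)%Z).
    { eapply Z.le_trans; [|eapply Z.le_trans; [exact Ht|]]; [lia|].
      eapply Z.le_trans; [apply Z.mul_le_mono_nonneg_r; [exact Q0|exact Hc]|].
      apply Z.eq_le_incl. unfold A2. change (Z.of_nat 1) with 1%Z. ring. }
    assert (HR := final_real _ _ _ _ _ HN A20 HZ).
    rewrite pow_1 in HR.
    apply combine_real2; auto. apply pow_le; auto.
Qed.
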